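(* There is a function $m:\mathbb{Z}_{>0}\to\mathbb{R}$ such that for every positive integer $n$ and every $n$-by-$n$ doubly nonnegative matrix $A$, the matrix $A^t$ is doubly nonnegative for all $t \geq m(n)$.
   Context: A real $n$-by-$n$ matrix is doubly nonnegative if it is symmetric, positive semidefinite, and entry-wise nonnegative. For a positive semidefinite matrix $A=\lambda_1x_1x_1^T+\cdots+\lambda_nx_nx_n^T$ (spectral decomposition with orthonormal eigenvectors $x_i$ and eigenvalues $\lambda_i\ge 0$) and real $t>0$, the power is defined by $A^t=\lambda_1^t x_1x_1^T+\cdots+\lambda_n^t x_nx_n^T$. *)

(* Defs.v *)
From HB Require Import structures.
From mathcomp Require Import all_boot all_order all_algebra.
From mathcomp Require Import reals exp.
Set Implicit Arguments. Unset Strict Implicit. Unset Printing Implicit Defensive.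
Import Order.TTheory GRing.Theory Num.Theory.
Local Open Scope ring_scope.

Section DNN.
Variables (R : realType) (n : nat).

Definition symmetric (A : 'M[R]_n) : Prop := A^T = A.
Definition psd (A : 'M[R]_n) : Prop :=
  forall x : 'cV[R]_n, 0 <= (x^T *m A *m x) 0 0.
Definition entrywise_nonneg (A : 'M[R]_n) : Prop := forall i j, 0 <= A i j.
Definition doubly_nonnegative (A : 'M[R]_n) : Prop :=
  [/\ symmetric A, psd A & entrywise_nonneg A].

Definition spectral_decomposition (A : 'M[R]_n) (U : 'M[R]_n) (lam : 'I_n -> R) :=
  [/\ U^T *m U = 1%:M, (forall i, 0 <= lam i) &
      A = \sum_(i < n) lam i *: (col i U *m (col i U)^T)].

(* B is A^t, computed from some spectral decomposition of A (the result does
   not depend on the choice of decomposition) *)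
Definition is_mpow (A : 'M[R]_n) (t : R) (B : 'M[R]_n) : Prop :=
  exists U lam, spectral_decomposition A U lam /\
    B = \sum_(i < n) (lam i `^ t) *: (col i U *m (col i U)^T).

End DNN.

(* Main.v *)
Require Import Defs.
From HB Require Import structures.
From mathcomp Require Import all_boot all_order all_algebra.
From mathcomp Require Import reals exp.
From mathcomp Require Import ring lra.
From mathcomp Require Import boolp classical_sets functions reals topology normedtype sequences derive realfun exp.
Import Order.TTheory numFieldNormedType.Exports GRing.Theory Num.Theory.
Local Open Scope ring_scope.

Lemma pigeon (T E : finType) (f : T -> E) m :
  (#|E| * m < #|T|)%N -> exists e, (m < #|[set x | f x == e]|)%N.
Proof.
move=> H; apply/existsP; apply: contraLR H; rewrite negb_exists => /forallP H.
rewrite -leqNgt -sum1_card (partition_big f predT) //= -sum_nat_const.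
apply: leq_sum => e _; rewrite sum1_card.
by have := H e; rewrite -leqNgt cardsE.
Qed.

Section Z.
Variable R : realType.
Definition hs (s : seq (R * R)) (x : R) : R := \sum_(p <- s) p.1 * expR (p.2 * x).
Definition dsq (s : seq (R * R)) := map (fun p : R * R => (p.1 * p.2, p.2)) s.

Lemma hs_derive s (x : R) : is_derive x (1:R) (hs s) (hs (dsq s) x).
Proof.
elim: s => [|p s IH].
  have -> : hs [::] = cst 0.
    by apply/funext => y; rewrite /hs big_nil.
  exact: is_derive_cst.
have -> : hs (p :: s) = (fun y => p.1 * expR (p.2 * y)) + hs s.
  by apply/funext => y; rewrite /hs big_cons.
rewrite /= {2}/hs big_cons /=.
apply: is_deriveD.
apply: trigger_derive.
rewrite /GRing.scale /= mulr1. ring.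
Qed.

Lemma hs_shift p s x : hs (p :: s) x =
  hs ((p.1, 0) :: [seq (q.1, q.2 - p.2) | q <- s]) x * expR (p.2 * x).
Proof.
rewrite /hs !big_cons big_map /= mul0r expR0 mulr1 mulrDl mulr_suml.
congr (_ + _); apply: eq_bigr => q _ /=; rewrite -mulrA -expRD; congr (_ * expR _).
ring.
Qed.

Lemma hs_zero_n n : forall s (z : nat -> R), size s = n ->
  (forall i, (i.+1 < n)%N -> z i < z i.+1) ->
  (forall i, (i < n)%N -> hs s (z i) = 0) -> forall x, hs s x = 0.
Proof.
elim: n => [|n IH] [|p s] z //= Hs Hinc Hz x.
  by rewrite /hs big_nil.
case: Hs => Hs.
set t := [seq (q.1, q.2 - p.2) | q <- s].
set s2 := (p.1, 0) :: t.
have Hz2 i : (i < n.+1)%N -> hs s2 (z i) = 0.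
  move=> /Hz; rewrite hs_shift => /eqP; rewrite mulf_eq0 (gt_eqF (expR_gt0 _)) orbF.
  by move/eqP.
have Hd y : derivable (hs s2) y 1 by case: (hs_derive s2 y).
have Hc : continuous (hs s2).
  by move=> r; exact/differentiable_continuous/derivable1_diffP/Hd.
have Hr i : exists c, (i.+1 < n.+1)%N -> z i < c < z i.+1 /\ hs (dsq t) c = 0.
  case: (ltnP i.+1 n.+1) => hi; last by exists 0.
  have [c cab Dc] := Rolle (Hinc i hi) (fun c _ => Hd c)
     (continuous_subspaceT Hc) (etrans (Hz2 i (ltnW hi)) (esym (Hz2 i.+1 hi))).
  exists c => _; split; first by rewrite !(itvP cab).
  have E0 : 'D_1 (hs s2) c = 0 by rewrite derive_val.
  clear Dc; have H1 := hs_derive s2 c.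
  have E1 : 'D_1 (hs s2) c = hs (dsq s2) c by rewrite derive_val.
  move: E1; rewrite E0 /hs /dsq /= big_cons /= mulr0 mul0r add0r => E1.
  exact: esym E1.
have [z' Hz'] := choice Hr.
have IH' := IH (dsq t) z'.
have H0 y : hs (dsq t) y = 0.
  apply: IH' => //.
  - by rewrite /dsq /t !size_map.
  - move=> i hi.
    have [/andP[_ h1] _] := Hz' i (ltnW hi).
    have [/andP[h2 _] _] := Hz' i.+1 hi.
    exact: lt_trans h1 h2.
  - by move=> i hi; have [_ ->] := Hz' i hi.
have Dk y : is_derive y (1:R) (hs s2) 0.
  have := hs_derive s2 y.
  by rewrite /hs /dsq /= big_cons /= mulr0 mul0r add0r -/(hs _ _) -/(dsq _) H0.
have := is_derive_0_is_cst x (z 0%N) Dk.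
rewrite Hz2 // hs_shift => ->; by rewrite mul0r.
Qed.

Lemma split_t (t : R) : 0 < t -> exists k : nat, k%:R < t <= k.+1%:R.
Proof.
move=> t0; have := real_ceil_itv (num_real t).
have c0 : (0 < Num.ceil t)%R by rewrite real_ceil_gt_int ?num_real.
have [k Hk] : exists k : nat, Num.ceil t - 1 = k%:Z.
  by exists `|Num.ceil t - 1|%N; rewrite gez0_abs // subr_ge0.
have -> : Num.ceil t = Posz k.+1.
  by rewrite -[Num.ceil t](subrK 1) Hk -addn1 PoszD.
have -> : Posz k.+1 - 1 = Posz k by rewrite -addn1 PoszD addrK.
by move=> H; exists k; exact: H.
Qed.

Lemma key (E : finType) (S : E -> seq (R * R)) (n : nat)
  (Hsz : forall e, (size (S e) <= n)%N)
  (H1 : forall m : nat, (0 < m)%N -> forall e, 0 <= hs (S e) m%:R)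
  (H2 : forall s, 0 < s -> (forall e, 0 <= hs (S e) s) -> forall e, 0 <= hs (S e) (s + 1))
  t : (#|E| * n)%:R < t -> forall e, 0 <= hs (S e) t.
Proof.
move=> ht e0; rewrite leNgt; apply/negP => hneg.
have t0 : 0 < t by apply: le_lt_trans ht.
have [k /andP[hk1 hk2]] := split_t t t0.
set phi := t - k%:R.
have phi0 : 0 < phi by rewrite subr_gt0.
have hkS : k.+1%:R = k%:R + 1 :> R by rewrite -natr1.
have phi1 : phi <= 1 by rewrite /phi; lra.
have Hiter s : 0 < s -> (forall e, 0 <= hs (S e) s) ->
    forall (i : nat) e, 0 <= hs (S e) (s + i%:R).
  move=> s0 Hs; elim=> [|i IH] e; first by rewrite addr0.
  rewrite -natr1 addrA; apply: H2 => //.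
  by apply: lt_le_trans s0 _; rewrite lerDl.
have Hneg (j : 'I_k.+1) : [exists e, hs (S e) (phi + (val j)%:R) < 0].
  apply: contraT => /existsPn Hj.
  have Hj' e : 0 <= hs (S e) (phi + (val j)%:R) by rewrite leNgt Hj.
  have := Hiter _ (ltr_wpDr (ler0n _ _) phi0) Hj' (k - val j)%N e0.
  have hjk : (val j <= k)%N by rewrite -ltnS ltn_ord.
  have -> : phi + (val j)%:R + (k - val j)%N%:R = t by rewrite natrB // /phi; ring.
  move=> H.
  by move: hneg; rewrite ltNge H.
pose f (j : 'I_k.+1) := odflt e0 [pick e | hs (S e) (phi + (val j)%:R) < 0].
have Hf j : hs (S (f j)) (phi + (val j)%:R) < 0.
  rewrite /f; case: pickP => //= H0.
  by have /existsP[e He] := Hneg j; rewrite H0 in He.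
have Hcard : (#|E| * n < #|'I_k.+1|)%N.
  rewrite card_ord -(ltr_nat R); exact: lt_le_trans ht hk2.
have [e He] := @pigeon _ _ f n Hcard.
set F := [set x | f x == e] in He.
set js := [seq val x | x <- enum F].
have szjs : size js = #|F| by rewrite size_map cardE.
have js_sorted : sorted ltn js.
  rewrite sorted_map /enum_mem; apply: sorted_filter.
    by move=> a b c /= ; exact: ltn_trans.
  by rewrite -enumT -sorted_map val_enum_ord iota_ltn_sorted.
have Hjs i : (i < size js)%N -> hs (S e) (phi + (nth 0%N js i)%:R) < 0.
  move=> hi; have /mapP[x] := mem_nth 0%N hi.
  rewrite mem_enum inE => /eqP <- ->; exact: Hf.
have Hc : continuous (hs (S e)).
  move=> r; apply/differentiable_continuous/derivable1_diffP.
  by case: (hs_derive (S e) r).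
have Hz i : exists z, (i < n)%N -> phi + (nth 0%N js i)%:R < z <= (nth 0%N js i).+1%:R
    /\ hs (S e) z = 0.
  case: (ltnP i n) => hi; last by exists 0.
  have hi' : (i < size js)%N by rewrite szjs (ltn_trans hi).
  set j := nth 0%N js i.
  have ha := Hjs i hi'; have hb := H1 (j.+1) isT e.
  have hab : phi + j%:R <= j.+1%:R by rewrite -natr1 addrC lerD2l.
  have Hv : Num.min (hs (S e) (phi + j%:R)) (hs (S e) j.+1%:R) <= 0 <=
      Num.max (hs (S e) (phi + j%:R)) (hs (S e) j.+1%:R).
    by rewrite ge_min le_max (ltW ha) hb orbT.
  have [c cab fc] := IVT hab (continuous_subspaceT Hc) Hv.
  exists c => _; split => //; rewrite (itvP cab) andbT lt_neqAle (itvP cab) andbT.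
  by apply/eqP => ec; move: ha; rewrite ec fc ltxx.
have [z Hzz] := choice Hz.
have Z := @hs_zero_n (size (S e)) (S e) z erefl.
have Z0 : forall x, hs (S e) x = 0.
  apply: Z => i hi.
  - have hi1 : (i.+1 < n)%N by apply: leq_trans hi (Hsz e).
    have [/andP[_ h1] _] := Hzz i (ltnW hi1).
    have [/andP[h2 _] _] := Hzz i.+1 hi1.
    apply: le_lt_trans h1 _; apply: le_lt_trans _ h2.
    have hlt : (nth 0%N js i < nth 0%N js i.+1)%N.
      apply: (sorted_ltn_nth ltn_trans) => //; rewrite inE szjs.
        by rewrite (ltn_trans _ He) // ltnW.
      by rewrite (ltn_trans hi1 He).
    by apply: ler_wpDl (ltW phi0) _; rewrite ler_nat.
  - by have [_ ->] := Hzz i (leq_trans hi (Hsz e)).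
have Hsz0 : (0 < size js)%N by rewrite szjs (leq_ltn_trans _ He).
by have := Hjs 0%N Hsz0; rewrite Z0 ltxx.
Qed.
End Z.
Arguments hs {R}.

Section M.
Variables (R : realType) (n : nat) (U : 'M[R]_n).
Hypothesis HU : U^T *m U = 1%:M.

Definition Pm (d : 'I_n -> R) : 'M[R]_n := U *m diag_mx (\row_i d i) *m U^T.

Lemma sum_form (d : 'I_n -> R) :
  \sum_(i < n) d i *: (col i U *m (col i U)^T) = Pm d.
Proof.
apply/matrixP => a b; rewrite summxE /Pm mul_mx_diag !mxE.
apply: eq_bigr => l _; rewrite !mxE big_ord1 !mxE; ring.
Qed.

Lemma Pm_entry d a b : Pm d a b = \sum_(l < n) d l * (U a l * U b l).
Proof.
rewrite /Pm mul_mx_diag !mxE; apply: eq_bigr => l _; rewrite !mxE; ring.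
Qed.

Lemma Pm_mul d e : Pm d *m Pm e = Pm (fun i => d i * e i).
Proof.
rewrite /Pm !mulmxA -[U *m _ *m U^T *m U]mulmxA HU mulmx1 -[U *m _ *m _]mulmxA.
by rewrite mulmx_diag; congr (_ *m diag_mx _ *m _); apply/matrixP => i j; rewrite !mxE.
Qed.

Lemma Pm_sym d : (Pm d)^T = Pm d.
Proof. by rewrite /Pm !trmx_mul trmxK tr_diag_mx mulmxA. Qed.

Lemma Pm_psd d : (forall i, 0 <= d i) -> psd (Pm d).
Proof.
move=> hd x; rewrite /Pm.
have -> : x^T *m (U *m diag_mx (\row_i d i) *m U^T) *m x =
   (U^T *m x)^T *m diag_mx (\row_i d i) *m (U^T *m x).
  by rewrite trmx_mul trmxK !mulmxA.
set y := U^T *m x.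
rewrite mul_mx_diag mxE; apply: sumr_ge0 => j _; rewrite !mxE.
by rewrite mulrAC -expr2 mulr_ge0 ?sqr_ge0.
Qed.

Lemma nn_mul (M N : 'M[R]_n) : entrywise_nonneg M -> entrywise_nonneg N ->
  entrywise_nonneg (M *m N).
Proof.
by move=> HM HN i j; rewrite mxE; apply: sumr_ge0 => k _; apply: mulr_ge0.
Qed.
End M.
Arguments Pm {R n}.
Arguments sum_form {R n}.
Arguments Pm_entry {R n}.
Arguments Pm_mul {R n U}.
Arguments Pm_sym {R n}.
Arguments Pm_psd {R n}.
Arguments nn_mul {R n}.

Theorem theorem2p2 (R : realType) :
  exists m : nat -> R,
    forall (n : nat), (0 < n)%N ->
    forall A : 'M[R]_n, doubly_nonnegative A ->
    forall t : R, 0 < t -> m n <= t ->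
    forall B : 'M[R]_n, is_mpow A t B -> doubly_nonnegative B.
Proof.
exists (fun n => ((n * n * n).+1)%:R) => n n0 A [As Apsd Ann] t t0 ht B
  [U [lam [[HU Hl HA] HB]]].
set P := fun s => Pm U (fun i => lam i `^ s).
have HBP : B = P t by rewrite HB sum_form.
have HAP : A = P 1.
  rewrite HA sum_form /P; congr (Pm _ _); apply/funext => i; by rewrite powRr1.
have Pmul s : 0 < s -> P (s + 1) = P s *m A.
  move=> s0; rewrite HAP /P (Pm_mul HU); congr (Pm _ _); apply/funext => i.
  rewrite powRD // (gt_eqF (ltr_wpDl (ltW s0) ltr01)) //.
have Pnat (m : nat) : entrywise_nonneg (P m.+1%:R).
  elim: m => [|m IH]; first by rewrite -HAP.
  by rewrite -natr1 Pmul ?ltr0Sn //; apply: nn_mul.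
pose S (e : 'I_n * 'I_n) := [seq (U e.1 l * U e.2 l, ln (lam l)) |
   l <- [seq l <- index_enum 'I_n | 0 < lam l]].
have Pent s e : 0 < s -> P s e.1 e.2 = hs (S e) s.
  move=> s0; rewrite /P Pm_entry /hs big_map big_filter.
  rewrite (bigID (fun l => 0 < lam l)) /= [X in _ + X]big1 ?addr0.
    apply: eq_bigr => l hl; rewrite /powR gt_eqF //; by rewrite mulrC [ln _ * s]mulrC.
  move=> l hl; have -> : lam l = 0.
    by apply/eqP; rewrite eq_le Hl andbT leNgt.
  by rewrite powR0 ?mul0r // gt_eqF.
have Hkey := @key R _ S n _ _ _ t.
split.
- by rewrite HBP /Defs.symmetric /P Pm_sym.
- rewrite HBP; apply: Pm_psd => i; exact: powR_ge0.
move=> i j; rewrite HBP (Pent t (i, j) t0).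
apply: Hkey.
- move=> e; rewrite /S size_map deprecated_filter_index_enum -cardE.
  by rewrite (leq_trans (max_card _)) ?card_ord.
- move=> [|m] // _ e; rewrite -Pent //; exact: Pnat.
- move=> s s0 Hs e.
  have s1 : 0 < s + 1 by lra.
  rewrite -(Pent _ _ s1) Pmul //; apply: nn_mul => // a b.
  by rewrite (Pent s (a, b) s0) Hs.
- by rewrite card_prod card_ord; apply: lt_le_trans ht; rewrite ltr_nat.
Qed.
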